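(* Let $R$ be a binary relation on $U$. Then $\wp(U)^{\vartriangle}$ is spatial and completely distributive if and only if for every $x\in U$, $R(x)$ is a union of sets $R(y)$ ($y\in U$) each of which is completely join-prime in $\wp(U)^{\vartriangle}$.
   Context: Let $U$ be a set and $R\subseteq U\times U$ a binary relation. For $x\in U$, $R(x)=\{y\in U\mid (x,y)\in R\}$ and $\breve R(x)=\{y\in U\mid (y,x)\in R\}$. For $X\subseteq U$, $X^{\vartriangle}=\{x\in U\mid \breve R(x)\cap X\neq\emptyset\}$ (so $\{x\}^{\vartriangle}=R(x)$), and $\wp(U)^{\vartriangle}=\{X^{\vartriangle}\mid X\subseteq U\}$, a complete lattice under $\subseteq$ in which joins are unions. An element $p$ of a complete lattice $L$ is completely join-prime if $p\le\bigvee Y$ implies $p\le y$ for some $y\in Y$; it is completely join-irreducible if $p=\bigvee Y$ implies $p\in Y$. $L$ is spatial if each element is the join of the completely join-irreducible elements below it, and completely distributive if $\bigwedge_{i\in I}\bigvee_{j\in J}x_{i,j}=\bigvee_{f\colon I\to J}\bigwedge_{i\in I}x_{i,f(i)}$ for all doubly indexed families. *)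

(* Defs.v *)
From mathcomp Require Import all_boot.
From mathcomp Require Export boolp classical_sets.
Set Implicit Arguments. Unset Strict Implicit. Unset Printing Implicit Defensive.
Local Open Scope classical_set_scope.

Section Defs.
Variable U : Type.

Definition Rimg (R : U -> U -> Prop) (x : U) : set U := [set y | R x y].

(* X^△ = { x | R̆(x) ∩ X ≠ ∅ } where R̆(x) = { y | (y,x) ∈ R } *)
Definition tri (R : U -> U -> Prop) (X : set U) : set U :=
  [set x | exists y, X y /\ R y x].

Definition Ltri (R : U -> U -> Prop) : set (set U) := range (tri R).

Definition is_lub (L : set (set U)) (Y : set (set U)) (z : set U) : Prop :=
  L z /\ (forall y, Y y -> y `<=` z) /\
  (forall w, L w -> (forall y, Y y -> y `<=` w) -> z `<=` w).

Definition is_glb (L : set (set U)) (Y : set (set U)) (z : set U) : Prop :=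
  L z /\ (forall y, Y y -> z `<=` y) /\
  (forall w, L w -> (forall y, Y y -> w `<=` y) -> w `<=` z).

Definition complete_lattice (L : set (set U)) : Prop :=
  forall Y, Y `<=` L -> (exists z, is_lub L Y z) /\ (exists z, is_glb L Y z).

Definition comp_join_prime (L : set (set U)) (p : set U) : Prop :=
  L p /\ forall Y z, Y `<=` L -> is_lub L Y z -> p `<=` z ->
    exists2 y, Y y & p `<=` y.

Definition comp_join_irred (L : set (set U)) (p : set U) : Prop :=
  L p /\ forall Y, Y `<=` L -> is_lub L Y p -> Y p.

Definition spatial (L : set (set U)) : Prop :=
  forall x, L x -> is_lub L [set p | comp_join_irred L p /\ p `<=` x] x.

(* ⋀_i ⋁_j x i j = ⋁_{f : I -> J} ⋀_i x i (f i), stated relationally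
   (joins/meets taken in L). *)
Definition comp_distributive (L : set (set U)) : Prop :=
  forall (I J : Type) (x : I -> J -> set U), (forall i j, L (x i j)) ->
  forall (s : I -> set U) (t : (I -> J) -> set U) (a b : set U),
    (forall i, is_lub L (range (x i)) (s i)) ->
    is_glb L (range s) a ->
    (forall f, is_glb L (range (fun i => x i (f i))) (t f)) ->
    is_lub L (range t) b ->
    a = b.

End Defs.

(* Main.v *)
Require Import Defs.
From mathcomp Require Import all_boot boolp classical_sets.
Set Implicit Arguments.
Local Open Scope classical_set_scope.

Section Aux.
Variables (U : Type) (R : U -> U -> Prop).
Local Notation L := (Ltri R).

Definition opn (z : set U) := forall u, z u -> exists y, Rimg R y `<=` z /\ R y u.

Lemma L_opn z : L z <-> opn z.
Proof.
split.
- case=> X _ <- u [y [Xy Ryu]]. exists y; split => // v Ryv. by exists y.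
- move=> oz. exists [set y | Rimg R y `<=` z] => //.
  apply/seteqP; split => u.
  + case=> y [/= sub Ryu]. exact: sub.
  + move=> zu. case: (oz u zu) => y [sub Ryu]. by exists y.
Qed.

Lemma Rimg_L y : L (Rimg R y).
Proof. by apply/L_opn => u Ru; exists y; split. Qed.

Lemma bigcup_L (Y : set (set U)) : Y `<=` L -> L (\bigcup_(z in Y) z).
Proof.
move=> YL; apply/L_opn => u [z Yz zu].
have [y [sub Ryu]] := (proj1 (L_opn z) (YL z Yz)) u zu.
exists y; split => // v /sub zv; by exists z.
Qed.

Lemma lub_bigcup Y : Y `<=` L -> is_lub L Y (\bigcup_(z in Y) z).
Proof.
move=> YL; split; first exact: bigcup_L.
split; first by move=> y Yy u yu; exists y.
move=> w _ ub u [z Yz zu]; exact: ub z Yz u zu.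
Qed.

Lemma lub_eq Y z : Y `<=` L -> is_lub L Y z -> z = \bigcup_(z in Y) z.
Proof.
move=> YL [Lz [ub least]]; apply/seteqP; split.
- apply: least; [exact: bigcup_L | by move=> y Yy u yu; exists y].
- move=> u [y Yy yu]; exact: ub y Yy u yu.
Qed.

Definition glbset (F : set (set U)) : set U :=
  [set u | exists y, Rimg R y `<=` \bigcap_(z in F) z /\ R y u].

Lemma glb_glbset F : is_glb L F (glbset F).
Proof.
split.
  apply/L_opn => u [y [sub Ryu]]; exists y; split => // v Ryv; by exists y.
split.
- move=> z Fz u [y [sub Ryu]]; exact: (sub u Ryu z Fz).
- move=> w /L_opn ow lb u wu. have [y [sub Ryu]] := ow u wu.
  exists y; split => // v /sub wv z Fz; exact: lb z Fz v wv.
Qed.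

Lemma cjp_cji p : comp_join_prime L p -> comp_join_irred L p.
Proof.
move=> [Lp H]; split => // Y YL lub.
have [y Yy py] := H Y p YL lub (fun u pu => pu).
suff -> : p = y by [].
apply/seteqP; split => //. case: lub => _ [ub _]; exact: ub y Yy.
Qed.

Lemma cji_nonempty p : comp_join_irred L p -> exists u, p u.
Proof.
move=> [Lp H]. apply: contrapT => nex.
have lub : is_lub L set0 p.
  split => //; split => // w _ _ u pu; exfalso; apply: nex; by exists u.
exact: (H set0 (sub0set _) lub).
Qed.

Lemma cji_cjp p : comp_distributive L -> comp_join_irred L p -> comp_join_prime L p.
Proof.
move=> CD cji; have [Lp irr] := cji; split => // Y z YL lubz pz.
have zE := lub_eq YL lubz.
pose x := fun (i : bool) (j : set U) => if i then p else [set u | Y j /\ j u].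
have xL : forall i j, L (x i j).
  move=> [] j //=; apply/L_opn => u [Yj ju].
  have [y [sub Ryu]] := proj1 (L_opn j) (YL j Yj) u ju.
  exists y; split => // v /sub jv; by split.
pose s := fun i => \bigcup_(w in range (x i)) w.
pose t := fun f : bool -> set U => glbset (range (fun i => x i (f i))).
have sl : forall i, is_lub L (range (x i)) (s i).
  move=> i; apply: lub_bigcup => w [j _ <-]; exact: xL.
have tL : range t `<=` L by move=> w [f _ <-]; case: (glb_glbset (range (fun i => x i (f i)))).
have eq := CD bool (set U) x xL s t (glbset (range s)) (\bigcup_(w in range t) w)
   sl (glb_glbset _) (fun f => glb_glbset _) (lub_bigcup tL).
have pa : p `<=` glbset (range s).
  case: (glb_glbset (range s)) => _ [_ gl]; apply: gl => //.
  move=> w [[] _ <-] u pu.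
  - exists p => //; by exists set0.
  - have := pz u pu; rewrite zE => -[j Yj ju].
    exists (x false j); first by exists j.
    by split.
rewrite eq in pa.
have lubt : is_lub L (range t) p.
  split => //; split.
  - move=> w [f _ <-].
    case: (glb_glbset (range (fun i => x i (f i)))) => _ [lb _].
    by apply: (lb (x true (f true))); exists true.
  - move=> w Lw ub v pv. have [w' [f _ <-] tv] := pa v pv. exact: (ub (t f)) => //.
have [f _ tfp] := irr _ tL lubt.
have [u pu] := cji_nonempty cji.
have pf : p `<=` x false (f false).
  rewrite -tfp. case: (glb_glbset (range (fun i => x i (f i)))) => _ [lb _].
  by apply: lb; exists false.
have [Yf _] := pf u pu.
exists (f false) => // v pv; exact: (proj2 (pf v pv)).
Qed.

End Aux.

Theorem mainTheorem17 (U : Type) (R : U -> U -> Prop) :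
  (spatial (Ltri R) /\ comp_distributive (Ltri R)) <->
  (forall x : U, exists S : set U,
      Rimg R x = \bigcup_(y in S) Rimg R y /\
      (forall y, S y -> comp_join_prime (Ltri R) (Rimg R y))).
Proof.
split.
- move=> [sp CD] x.
  exists [set y | comp_join_prime (Ltri R) (Rimg R y) /\ Rimg R y `<=` Rimg R x].
  split; last by move=> y [].
  apply/seteqP; split; last by move=> u [y [_ sub] Ryu]; exact: sub.
  move=> u Rxu.
  have Lx := Rimg_L R x.
  have Psub : [set p | comp_join_irred (Ltri R) p /\ p `<=` Rimg R x] `<=` Ltri R
    by move=> p [[]].
  have E := lub_eq Psub (sp _ Lx). rewrite E in Rxu.
  case: Rxu => p [cjip psub] pu.
  have [Lp irr] := cjip.
  pose Q := [set w | exists y, w = Rimg R y /\ Rimg R y `<=` p].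
  have QL : Q `<=` Ltri R by move=> w [y [-> _]]; exact: Rimg_L.
  have lubQ : is_lub (Ltri R) Q p.
    split=> //; split; first by move=> w [y [-> ?]].
    move=> w Lw ub v pv.
    have [y [sub Ryv]] := proj1 (L_opn R p) Lp v pv.
    apply: (ub (Rimg R y)) => //. by exists y.
  have [y [py _]] := irr Q QL lubQ.
  exists y; last by rewrite -py.
  split; rewrite -py //. exact: cji_cjp.
- move=> H; split.
  + move=> z Lz; split => //; split; first by move=> p [].
    move=> w Lw ub u zu.
    have [x [sub Rxu]] := proj1 (L_opn R z) Lz u zu.
    have [S [E cjpS]] := H x.
    have : Rimg R x u by [].
    rewrite E => -[y Sy Ryu].
    apply: (ub (Rimg R y)) => //; split; first exact: cjp_cji (cjpS y Sy).
    by move=> v Ryv; apply: sub; rewrite E; exists y.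
  + move=> I J x xL s t a b sl ga tg lb.
    apply/seteqP; split.
    * move=> u au.
      case: (ga) => La [lba gla].
      have [x0 [sub Rx0u]] := proj1 (L_opn R a) La u au.
      have [S [E cjpS]] := H x0.
      have : Rimg R x0 u by [].
      rewrite E => -[y Sy Ryu].
      have Rya : Rimg R y `<=` a by move=> v Ryv; apply: sub; rewrite E; exists y.
      have [_ cjpy] := cjpS y Sy.
      have rxL : forall i, range (x i) `<=` Ltri R by move=> i w [j _ <-].
      have ais : forall i, a `<=` s i by move=> i; apply: lba; exists i.
      have ex : forall i, exists j, Rimg R y `<=` x i j.
        move=> i.
        have [w [j _ <-] sw] := cjpy (range (x i)) (s i) (rxL i) (sl i)
          (fun v yv => ais i v (Rya v yv)).
        by exists j.
      have [f hf] := choice ex.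
      have ytf : Rimg R y `<=` t f.
        case: (tg f) => _ [_ gl]; apply: gl; first exact: Rimg_L.
        by move=> w [i _ <-]; exact: hf.
      case: lb => _ [ub _]; apply: (ub (t f)); first by exists f.
      exact: ytf.
    * case: (lb) => _ [_ glb]; apply: glb; first by case: ga.
      move=> w [f _ <-].
      case: (ga) => _ [_ gla]; apply: gla; first by case: (tg f).
      move=> w' [i _ <-] v tv.
      case: (sl i) => _ [ub _]; apply: (ub (x i (f i))); first by exists (f i).
      case: (tg f) => _ [lbt _]; apply: (lbt (x i (f i))) => //; by exists i.
Qed.
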